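(* Let $X$ be a Banach space and $(x_n)_{n\in\mathbb{N}}$ a sequence in $X$ with $\liminf_n \|x_n\|=0$, and let $\mathcal{I}$ be an ideal on $\mathbb{N}$ with the Baire property. Suppose that there exists $s\in S$ such that $\left(\sum_{i=1}^n x_{s(i)}\right)_n$ is unbounded (equivalently, there exists $p\in P$ such that $\left(\sum_{i=1}^n x_{p(i)}\right)_n$ is unbounded). Then the sets $E(\mathcal{I},(x_n))=\left\{s \in S : \left(\sum_{i=1}^n x_{s(i)}\right)_n \text{ is } \mathcal{I}\text{-bounded}\right\}$ and $F(\mathcal{I},(x_n))=\left\{p \in P : \left(\sum_{i=1}^n x_{p(i)}\right)_n \text{ is } \mathcal{I}\text{-bounded}\right\}$ are meager in $S$ and $P$, respectively.
   Context: An ideal on $\mathbb{N}$ is a family $\mathcal{I}\subset \mathcal{P}(\mathbb{N})$ with $\emptyset\in\mathcal{I}$, closed under finite unions and subsets, with $\mathbb{N}\notin\mathcal{I}$ and containing all finite subsets of $\mathbb{N}$. Identifying $\mathcal{P}(\mathbb{N})$ with $\{0,1\}^{\mathbb{N}}$ (product topology), $\mathcal{I}$ has the Baire property if it is the symmetric difference of an open set and a meager set. A sequence $(y_n)$ in a normed space is $\mathcal{I}$-bounded if there is $M>0$ with $\{n\in\mathbb{N} : \|y_n\|>M\}\in\mathcal{I}$. $S=\{s\in\mathbb{N}^{\mathbb{N}} : s \text{ strictly increasing}\}$, $P=\{p\in\mathbb{N}^{\mathbb{N}} : p \text{ a bijection of }\mathbb{N}\}$, with the subspace topology of $\mathbb{N}^{\mathbb{N}}$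 (product of discrete spaces). *)

(* Defs.v *)
From HB Require Import structures.
From mathcomp Require Import all_boot all_order all_algebra.
From mathcomp Require Import all_classical all_reals all_analysis.
Set Implicit Arguments. Unset Strict Implicit. Unset Printing Implicit Defensive.
Import Order.TTheory GRing.Theory Num.Theory.
Import numFieldNormedType.Exports.
Local Open Scope classical_set_scope.
Local Open Scope ring_scope.

Definition nowhere_dense {T : topologicalType} (A : set T) : Prop :=
  interior (closure A) = set0.

Definition meager {T : topologicalType} (A : set T) : Prop :=
  exists F : (set T)^nat, (forall n, nowhere_dense (F n)) /\ A `<=` \bigcup_n F n.

Definition is_ideal (I : set (set nat)) : Prop :=
  [/\ I set0,
      (forall A B, I A -> I B -> I (A `|` B)),
      (forall A B, B `<=` A -> I A -> I B),
      ~ I setT &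
      (forall A, finite_set A -> I A)].

(* P(nat) identified with {0,1}^nat (product topology, bool discrete). *)
Definition ideal_as_subset (I : set (set nat)) : set {ptws nat -> bool} :=
  [set f | I [set n | f n]].

Definition has_Baire_property {T : topologicalType} (A : set T) : Prop :=
  exists U M : set T, [/\ open U, meager M & A = (U `\` M) `|` (M `\` U)].

Definition I_bounded {R : realType} {X : normedModType R}
  (I : set (set nat)) (y : nat -> X) : Prop :=
  exists2 M : R, 0 < M & I [set n | M < `|y n|].

Definition Sset : set {ptws nat -> nat} := [set s | forall m n, (m < n)%N -> (s m < s n)%N].
Definition Pset : set {ptws nat -> nat} := [set p | bijective p].

(* n-th partial sum x_{s 0} + ... + x_{s n} (indices start at 0). *)
Definition psum {R : realType} {X : normedModType R} (x : nat -> X) (s : nat -> nat)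
  : nat -> X := fun n => \sum_(0 <= i < n.+1) x (s i).

Definition Eset {R : realType} {X : normedModType R} (I : set (set nat)) (x : nat -> X)
  : set (set_type Sset) := [set s | I_bounded I (psum x (set_val s))].

Definition Fset {R : realType} {X : normedModType R} (I : set (set nat)) (x : nat -> X)
  : set (set_type Pset) := [set p | I_bounded I (psum x (set_val p))].

(* Main.v *)
Require Import Defs.
From HB Require Import structures.
From mathcomp Require Import all_boot all_order all_algebra.
From mathcomp Require Import all_classical all_reals all_analysis.
From mathcomp Require Import zify.
Import Order.TTheory GRing.Theory Num.Theory.
Import numFieldNormedType.Exports.
Local Open Scope classical_set_scope.
Local Open Scope ring_scope.
Set Implicit Arguments. Unset Strict Implicit.
Definition cyl {T : Type} (f : nat -> T) (m : nat) : set (nat -> T) :=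
  [set g | forall i, (i < m)%N -> g i = f i].

Lemma cyl_mono {T : Type} (f : nat -> T) m m' : (m <= m')%N -> cyl f m' `<=` cyl f m.
Proof. by move=> le g cg i im; apply: cg; exact: leq_trans im le. Qed.

Lemma ptws_nbhs_cyl (T : discreteUniformType) (f : {ptws nat -> T})
  (U : set {ptws nat -> T}) : nbhs f U -> exists m, cyl f m `<=` U.
Proof.
set F := filter_from setT (cyl f).
have FF : Filter F.
  apply: filter_from_filter; first by exists 0%N.
  move=> i j _ _; exists (maxn i j) => // g cg; split.
    by apply: cyl_mono cg; exact: leq_maxl.
  by apply: cyl_mono cg; exact: leq_maxr.
have : {ptws, F --> f}.
  apply/pointwise_cvgP => t A /=; rewrite nbhs_principalE => At.
  exists t.+1 => // g cg /=; rewrite cg //; exact/principal_filterP.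
move=> H nU; have [m _ sub] := H _ nU; by exists m.
Qed.

Lemma cyl_open (T : discreteUniformType) (f : {ptws nat -> T}) m :
  open (cyl f m : set {ptws nat -> T}).
Proof.
elim: m => [|m IH].
  have -> : cyl f 0 = setT by apply/seteqP; split => // g _ i.
  exact: openT.
have -> : cyl f m.+1 = cyl f m `&` (proj m @^-1` [set f m]).
  apply/seteqP; split => g.
    move=> cg; split; first by apply: cyl_mono cg.
    by rewrite /proj /=; apply: cg.
  move=> [cg pg] i; rewrite ltnS leq_eqVlt => /orP[/eqP->|im]; last exact: cg.
  exact: pg.
apply: openI => //; apply: open_comp => [g _|]; last exact: discrete_open.
exact: proj_continuous.
Qed.

Lemma st_nbhs_cyl (Q : set {ptws nat -> nat}) (s : set_type Q) (U : set (set_type Q)) :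
  nbhs s U -> exists m, [set t : set_type Q | cyl (set_val s) m (set_val t)] `<=` U.
Proof.
rewrite nbhsE => -[V [oV Vs] VU].
case: oV => W oW eqW.
have nW : nbhs (set_val s : {ptws nat -> nat}) W.
  apply: open_nbhs_nbhs; split => //; by rewrite -eqW in Vs.
have [m cm] := ptws_nbhs_cyl nW.
exists m => t ct; apply: VU; rewrite -eqW; exact: cm.
Qed.

Lemma st_cyl_open (Q : set {ptws nat -> nat}) (f : nat -> nat) m :
  open [set t : set_type Q | cyl f m (set_val t)].
Proof. by exists (cyl f m : set {ptws nat -> nat}) => //; exact: cyl_open. Qed.

Lemma nd_suff (T : topologicalType) (D : set T) :
  (forall U, open U -> U !=set0 -> exists V, [/\ open V, V !=set0, V `<=` U & V `&` D = set0]) ->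
  nowhere_dense D.
Proof.
move=> H; apply/seteqP; split => // x ix; exfalso.
have [V [oV [y Vy] VU VD]] := H _ (open_interior _) (ex_intro _ x ix).
have cy : closure D y by exact: interior_subset (VU _ Vy).
have nV : nbhs y V by apply: open_nbhs_nbhs.
have [z [Dz Vz]] := cy _ nV.
by have : (V `&` D) z by []; rewrite VD.
Qed.

Lemma nd_settype (Q : set {ptws nat -> nat}) (D : set (set_type Q)) :
  (forall (s0 : set_type Q) m0, exists (s : set_type Q) q,
     [/\ (m0 <= q)%N, cyl (set_val s0) m0 (set_val s) &
         forall t : set_type Q, cyl (set_val s) q (set_val t) -> ~ D t]) ->
  nowhere_dense D.
Proof.
move=> H; apply: nd_suff => U oU [s0 Us0].
have [m0 cm0] := st_nbhs_cyl (open_nbhs_nbhs (conj oU Us0)).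
have [s [q [le cs0 nD]]] := H s0 m0.
exists [set t : set_type Q | cyl (set_val s) q (set_val t)]; split.
- exact: st_cyl_open.
- by exists s.
- move=> t ct; apply: cm0 => i im; rewrite /= (ct i (leq_trans im le)); exact: cs0.
- by apply/seteqP; split => // t [ct Dt]; exact: nD ct Dt.
Qed.

Lemma closed_cyl (C : set {ptws nat -> bool}) : closed C ->
  forall B : {ptws nat -> bool}, ~ C B -> exists q, forall h, cyl B q h -> ~ C h.
Proof.
move=> cC B nCB.
have nb : nbhs B (~` C) by apply: open_nbhs_nbhs; split => //; exact/closed_openC.
have [q cq] := ptws_nbhs_cyl nb; exists q => h /cq; done.
Qed.

Lemma nd_cyl (F : set {ptws nat -> bool}) : nowhere_dense F ->
  forall (f : nat -> bool) m, exists g q,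
    [/\ (m <= q)%N, cyl f m g & forall h, cyl g q h -> ~ closure F h].
Proof.
move=> ndF f m.
set V := (cyl f m : set {ptws nat -> bool}) `&` ~` closure F.
have oV : open V by apply: openI; [exact: cyl_open | exact/closed_openC/closed_closure].
have [g Vg] : V !=set0.
  apply/set0P/negP => /eqP V0.
  have sub : (cyl f m : set {ptws nat -> bool}) `<=` (closure F)°.
    move=> h ch; rewrite /interior; apply: (@filterS _ _ _ (cyl f m : set {ptws nat -> bool})).
      move=> k ck; apply: contrapT => nk.
      by have : V k by []; rewrite V0.
    by apply: open_nbhs_nbhs; split => //; exact: cyl_open.
  have : (closure F)° (f : {ptws nat -> bool}) by apply: sub.
  by rewrite ndF.
have [q' cq'] := ptws_nbhs_cyl (open_nbhs_nbhs (conj oV Vg)).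
exists g, (maxn q' m); split.
- exact: leq_maxr.
- by case: Vg.
- move=> h /(cyl_mono (leq_maxl q' m)) /cq' [].
  done.
Qed.

Lemma nested_limit (Inv : (nat -> bool) -> nat -> Prop)
  (Good : nat -> (nat -> bool) -> nat -> Prop) (g0 : nat -> bool) (m0 : nat) :
  Inv g0 m0 ->
  (forall n g m, Inv g m -> exists g' m',
      [/\ (m < m')%N, cyl g m g', Inv g' m' & Good n g' m']) ->
  exists A : nat -> bool, cyl g0 m0 A /\
    forall n, exists g m, [/\ Good n g m, (n < m)%N & cyl g m A].
Proof.
move=> I0 H.
have step : forall n (p : (nat -> bool) * nat), {p' : (nat -> bool) * nat |
    Inv p.1 p.2 -> [/\ (p.2 < p'.2)%N, cyl p.1 p.2 p'.1, Inv p'.1 p'.2 & Good n p'.1 p'.2]}.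
  move=> n [g m]; case: (pselect (Inv g m)) => Igm.
    have : exists p' : (nat -> bool) * nat,
        [/\ (m < p'.2)%N, cyl g m p'.1, Inv p'.1 p'.2 & Good n p'.1 p'.2].
      by have [g' [m' ?]] := H n g m Igm; exists (g', m').
    by move=> /cid [p' Hp']; exists p'.
  by exists (g, m).
pose sq := fix sq n := match n with 0 => (g0, m0) | k.+1 => proj1_sig (step k (sq k)) end.
have Isq : forall n, Inv (sq n).1 (sq n).2.
  elim => [|n IH] //=.
  by case: (proj2_sig (step n (sq n)) IH).
have Psq : forall n, [/\ ((sq n).2 < (sq n.+1).2)%N, cyl (sq n).1 (sq n).2 (sq n.+1).1,
    Inv (sq n.+1).1 (sq n.+1).2 & Good n (sq n.+1).1 (sq n.+1).2].
  by move=> n; exact: (proj2_sig (step n (sq n)) (Isq n)).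
have mgrow : forall n, (n <= (sq n).2)%N.
  elim => [|n IH] //; case: (Psq n) => lt _ _ _; exact: leq_ltn_trans IH lt.
have agree : forall a b, (a <= b)%N ->
    ((sq a).2 <= (sq b).2)%N /\ cyl (sq a).1 (sq a).2 (sq b).1.
  move=> a; elim => [|b IH].
    by rewrite leqn0 => /eqP ->.
  rewrite leq_eqVlt => /orP[/eqP <-|]; first by [].
  rewrite ltnS => /IH [le c]; case: (Psq b) => lt c' _ _; split.
    exact: leq_trans le (ltnW lt).
  move=> i im; rewrite (c' i (leq_trans im le)); exact: c.
pose A i := (sq i.+1).1 i.
have cA : forall n, cyl (sq n).1 (sq n).2 A.
  move=> n i im; rewrite /A.
  case: (leqP n i.+1) => h.
    by case: (agree _ _ h) => _ /(_ i im).
  case: (agree _ _ (ltnW h)) => _ c; rewrite c //.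
exists A; split; first exact: (cA 0%N).
move=> n; exists (sq n.+1).1, (sq n.+1).2; split.
- by case: (Psq n).
- exact: (mgrow n.+1).
- exact: cA.
Qed.

Lemma ideal_meager (I : set (set nat)) : is_ideal I ->
  has_Baire_property (ideal_as_subset I) -> meager (ideal_as_subset I).
Proof.
case=> I0 IU Isub IT Ifin [U [M [oU [F [ndF MF]] eqI]]].
case: (pselect (U = set0)) => [U0|].
  exists F; split => // f If; apply: MF; rewrite eqI in If.
  by case: If => [[Uf _]|[Mf _]] //; rewrite U0 in Uf.
move/eqP/set0P => [f0 Uf0].
have [q cq] := ptws_nbhs_cyl (open_nbhs_nbhs (conj oU Uf0)).
pose phi (g : nat -> bool) : nat -> bool := fun i => if (i < q)%N then f0 i else ~~ g i.
pose Inv := (fun g m => (q <= m)%N /\ cyl f0 q g).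
pose Good := (fun n g m => forall h, cyl g m h -> ~ closure (F n) h /\ ~ closure (F n) (phi h)).
have STEP : forall n g m, Inv g m -> exists g' m',
      [/\ (m < m')%N, cyl g m g', Inv g' m' & Good n g' m'].
  move=> n g m [qm cg].
  have [g1 [q1 [le1 c1 av1]]] := nd_cyl (ndF n) g m.
  have [g2 [q2 [le2 c2 av2]]] := nd_cyl (ndF n) (phi g1) q1.
  have hg1 : forall h, cyl (phi g2) q2.+1 h -> cyl g1 q1 h.
    move=> h ch i iq1; rewrite ch; last by apply: leq_trans iq1 _; exact: leqW.
    rewrite /phi; case: ifP => iq.
      by rewrite c1 ?cg // (leq_trans iq qm).
    by rewrite c2 // /phi iq negbK.
  exists (phi g2), q2.+1; split.
  - by rewrite ltnS (leq_trans le1 le2).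
  - move=> i im; rewrite (hg1 (phi g2) (fun _ _ => erefl) i (leq_trans im le1)); exact: c1.
  - by split; [exact: leqW (leq_trans qm (leq_trans le1 le2)) | move=> i iq; rewrite /phi iq].
  - move=> h ch; split; first exact: av1 (hg1 _ ch).
    apply: av2 => i iq2; rewrite /phi; case: ifP => iq.
      by rewrite c2 ?(leq_trans iq (leq_trans qm le1)) // /phi iq.
    by rewrite ch ?(leqW iq2) // /phi iq negbK.
have [A [cA GA]] := @nested_limit Inv Good f0 q (conj (leqnn q) (fun i _ => erefl)) STEP.
have nM : forall g, (forall n, ~ closure (F n) g) -> ~ M g.
  by move=> g H /MF [n _ Fg]; apply: (H n); exact: subset_closure.
have avA : forall n, ~ closure (F n) A /\ ~ closure (F n) (phi A).
  by move=> n; have [g [m [Gg _ cgA]]] := GA n; exact: Gg.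
have IA : I [set i | A i].
  have : ideal_as_subset I A by rewrite eqI; left; split; [apply: cq | apply: nM => n; case: (avA n)].
  done.
have IpA : I [set i | phi A i].
  have : ideal_as_subset I (phi A).
    rewrite eqI; left; split; last by apply: nM => n; case: (avA n).
    by apply: cq => i iq; rewrite /phi iq.
  done.
exfalso; apply: IT.
have -> : [set: nat] = ([set i | A i] `|` [set i | phi A i]) `|` `I_q.
  apply/seteqP; split => // i _ /=; rewrite /phi.
  case: (ltnP i q) => iq; first by right.
  by case: (boolP (A i)) => Ai; [left; left | left; right].
exact: IU (IU _ _ IA IpA) (Ifin _ (finite_II q)).
Qed.

Lemma sub_claim (I : set (set nat)) (isI : is_ideal I)
  (F : (set {ptws nat -> bool})^nat)
  (cover : ideal_as_subset I `<=` \bigcup_n F n) (A : set nat) (IA : I A) :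
  exists n m (us : seq bool), (forall i, nth false us i -> A i) /\
    forall B : nat -> bool, (forall i, B i -> A i) ->
      (forall i, (i < m)%N -> B i = nth false us i) -> closure (F n) B.
Proof.
case: isI => I0 IU Isub IT Ifin.
apply: contrapT => H.
have H' : forall n m (us : seq bool), (forall i, nth false us i -> A i) ->
    exists B : nat -> bool, [/\ (forall i, B i -> A i),
      (forall i, (i < m)%N -> B i = nth false us i) & ~ closure (F n) B].
  move=> n m us hu; apply: contrapT => nB; apply: H; exists n, m, us; split => //.
  move=> B hB ag; apply: contrapT => nc; apply: nB; by exists B.
pose Inv := (fun (g : nat -> bool) (m : nat) => forall i, g i -> A i).
pose Good := (fun n (g : nat -> bool) m =>
   Inv g m /\ forall h, cyl g m h -> ~ closure (F n) h).
have STEP : forall n g m, Inv g m -> exists g' m',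
      [/\ (m < m')%N, cyl g m g', Inv g' m' & Good n g' m'].
  move=> n g m Ig.
  have hu : forall i, nth false (mkseq g m) i -> A i.
    move=> i; case: (ltnP i m) => im; first by rewrite nth_mkseq //; exact: Ig.
    by rewrite nth_default // size_mkseq.
  have [B [BA ag nB]] := H' n m (mkseq g m) hu.
  have [q cq] := closed_cyl (@closed_closure _ (F n)) nB.
  exists B, (maxn q m.+1); split.
  - exact: leq_maxr.
  - by move=> i im; rewrite ag // nth_mkseq.
  - exact: BA.
  - split; first exact: BA.
    by move=> h ch; apply: cq; apply: cyl_mono ch; exact: leq_maxl.
have [L [_ GL]] := @nested_limit Inv Good (fun _ => false) 0%N (fun i (h : false) => match h with end) STEP.
have LA : forall i, L i -> A i.
  move=> i Li; have [g [m [[Ig _] im cgL]]] := GL i.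
  by apply: Ig; rewrite -cgL.
have IL : ideal_as_subset I L by apply: Isub IA => i /= /LA.
have [n _ FnL] := cover _ IL.
have [g [m [[_ av] _ cgL]]] := GL n.
exact: (av L cgL (subset_closure FnL)).
Qed.
Lemma liminf_small (R : realType) (X : normedModType R) (x : nat -> X) :
  limn_einf (fun n => (`|x n|)%:E) = 0%E ->
  forall (e : R) N, 0 < e -> exists n, (N <= n)%N /\ `|x n| < e.
Proof.
move=> h e N e0; apply: contrapT => H.
have H' : forall n, (N <= n)%N -> e <= `|x n|.
  move=> n Nn; rewrite leNgt; apply/negP => lt; apply: H; by exists n.
have h1 : (e%:E <= einfs (fun n => (`|x n|)%:E) N)%E.
  apply/ereal_infP => _ [k /= Nk <-]; rewrite lee_fin; exact: H'.
have h2 : (einfs (fun n => (`|x n|)%:E) N <= limn_einf (fun n => (`|x n|)%:E))%E.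
  rewrite limn_einf_lim (cvg_lim _ (@cvg_einfs_sup _ _)) //.
  by apply: ereal_sup_ubound; exists N.
have := le_trans h1 h2; rewrite h lee_fin leNgt e0; done.
Qed.


Section Analytic.
Variables (R : realType) (X : normedModType R) (x : nat -> X).

Lemma psum_ext (a b : nat -> nat) k : (forall i, (i <= k)%N -> a i = b i) ->
  psum x a k = psum x b k.
Proof. by move=> H; apply: eq_big_nat => i /andP[_ ik]; rewrite H. Qed.

Lemma unb_tail (t : nat -> nat) : ~ (exists M : R, forall n, `|psum x t n| <= M) ->
  forall B N, exists n, (N <= n)%N /\ B < `|psum x t n|.
Proof.
move=> nb B N; apply: contrapT => H; apply: nb.
exists (Num.max B 0 + \sum_(0 <= k < N) `|psum x t k|) => n.
have s0 : 0 <= \sum_(0 <= k < N) `|psum x t k| by apply: sumr_ge0.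
case: (leqP N n) => Nn.
  have : `|psum x t n| <= B.
    rewrite leNgt; apply/negP => lt; apply: H; by exists n.
  move=> h; apply: (le_trans h); have hb : B <= Num.max B 0 by rewrite le_max lexx.
  apply: (le_trans hb); by rewrite lerDl.
have hb : 0 <= Num.max B 0 by rewrite le_max lexx orbT.
apply: (@le_trans _ _ (\sum_(0 <= k < N) `|psum x t k|)); last by rewrite lerDr.
rewrite (big_cat_nat (leq0n n) (ltnW Nn)) (big_ltn Nn) /=.
rewrite addrCA lerDl; apply: addr_ge0; apply: sumr_ge0 => *; exact: normr_ge0.
Qed.

Lemma Sset_ge (t : nat -> nat) : Sset t -> forall k, (k <= t k)%N.
Proof.
move=> tS; elim => [|k IH] //; apply: leq_ltn_trans IH _; exact: tS.
Qed.

Lemma block (t : nat -> nat) (tS : Sset t)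
  (tU : ~ (exists M : R, forall n, `|psum x t n| <= M)) (M : R)
  (s0 : nat -> nat) (m0 : nat) :
  exists (s1 : nat -> nat) (m1 : nat),
  [/\ (m0 < m1)%N, (forall i, (i < m0)%N -> s1 i = s0 i),
     (forall i k, (i < m0)%N -> (m0 <= k)%N -> (s1 i < s1 k)%N),
     (forall a b, (m0 <= a)%N -> (a < b)%N -> (s1 a < s1 b)%N) &
     M + 1 < `|psum x s1 m1.-1| ].
Proof.
pose d := (\sum_(i < m0) s0 i).+1.
pose s1 := fun i => if (i < m0)%N then s0 i else t (i + d)%N.
pose sg := \sum_(0 <= i < m0) x (s0 i).
pose c := sg - \sum_(0 <= i < m0 + d) x (t i).
have key : forall k, (m0 <= k)%N -> psum x s1 k = c + psum x t (k + d).
  move=> k mk; rewrite /psum.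
  rewrite (big_cat_nat (leq0n m0) (leqW mk)) /=.
  have -> : \sum_(0 <= i < m0) x (s1 i) = sg.
    by apply: eq_big_nat => i /andP[_ im]; rewrite /s1 im.
  have -> : \sum_(m0 <= i < k.+1) x (s1 i) = \sum_(m0 <= i < k.+1) x (t (i + d)%N).
    by apply: eq_big_nat => i /andP[mi _]; rewrite /s1; have -> : (i < m0)%N = false by lia.
  have le1 : (m0 + d <= (k + d).+1)%N by lia.
  rewrite (big_cat_nat (leq0n _) le1) /= big_addn.
  have -> : ((k + d).+1 - d = k.+1)%N by lia.
  by rewrite /c addrA subrK.
have [n [Nn Bn]] := unb_tail tU (M + 1 + `|c|) (m0 + d).
exists s1, (n - d).+1; split.
- lia.
- by move=> i im; rewrite /s1 im.
  move=> i k im mk; rewrite /s1 im; have -> : (k < m0)%N = false by lia.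
  apply: (@leq_trans (k + d)%N); last exact: Sset_ge.
  have : (s0 i <= \sum_(j < m0) s0 j)%N.
    by rewrite (bigD1 (Ordinal im)) //= leq_addr.
  rewrite /d; lia.
- move=> a b ma ab; rewrite /s1; have -> : (a < m0)%N = false by lia.
  have -> : (b < m0)%N = false by lia.
  apply: tS; lia.
- rewrite /= key; last by lia.
  have -> : (n - d + d = n)%N by lia.
  rewrite (addrC c); apply: (lt_le_trans _ (lerB_normD _ _)).
  by rewrite ltrBrDr.
Qed.


Lemma fill (small : forall (e : R) N, 0 < e -> exists n, (N <= n)%N /\ `|x n| < e)
  (M : R) (s1 : nat -> nat) (m0 m1 q : nat) (h01 : (m0 < m1)%N)
  (mono1 : forall i k, (i < m0)%N -> (m0 <= k)%N -> (s1 i < s1 k)%N)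
  (mono2 : forall a b, (m0 <= a)%N -> (a < b)%N -> (s1 a < s1 b)%N)
  (big : M + 1 < `|psum x s1 m1.-1|) :
  exists s2 : nat -> nat, [/\ (forall i, (i < m1)%N -> s2 i = s1 i),
     (forall i k, (i < m0)%N -> (m0 <= k)%N -> (s2 i < s2 k)%N),
     (forall a b, (m0 <= a)%N -> (a < b)%N -> (s2 a < s2 b)%N) &
     forall k, (m1 <= k)%N -> (k < q)%N -> M < `|psum x s2 k| ].
Proof.
pose e : R := (q.+1%:R)^-1.
have e0 : 0 < e by rewrite invr_gt0 ltr0n.
have nx : forall a, exists b, (a < b)%N /\ `|x b| < e.
  by move=> a; have [n [an xn]] := small e a.+1 e0; exists n.
pose nxt a := proj1_sig (cid (nx a)).
have nxtP : forall a, (a < nxt a)%N /\ `|x (nxt a)| < e.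
  by move=> a; exact: (proj2_sig (cid (nx a))).
pose g := fix g k := match k with 0 => nxt (s1 m1.-1) | k'.+1 => nxt (g k') end.
have gS : forall k, (g k < g k.+1)%N by move=> k; case: (nxtP (g k)).
have gsmall : forall k, `|x (g k)| < e by case => [|k]; [case: (nxtP (s1 m1.-1)) | case: (nxtP (g k))].
have g0 : (s1 m1.-1 < g 0)%N by case: (nxtP (s1 m1.-1)).
have gmono : forall a b, (a < b)%N -> (g a < g b)%N.
  exact: (homo_ltn (fun a b c => @ltn_trans a b c) gS).
have gle : forall a b, (a <= b)%N -> (g a <= g b)%N.
  move=> a b; rewrite leq_eqVlt => /orP[/eqP -> //|ab]; exact/ltnW/gmono.
pose s2 := fun i => if (i < m1)%N then s1 i else g (i - m1)%N.
have s1le : forall a, (m0 <= a)%N -> (a < m1)%N -> (s1 a <= s1 m1.-1)%N.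
  move=> a ma am; have : (a <= m1.-1)%N by lia.
  rewrite leq_eqVlt => /orP[/eqP -> //|lt]; exact/ltnW/mono2.
exists s2; split.
- by move=> i im; rewrite /s2 im.
- move=> i k im mk; rewrite /s2; have -> : (i < m1)%N by lia.
  case: ifP => km; first exact: mono1.
  apply: (@leq_trans (s1 m1.-1)); first by apply: mono1 => //; lia.
  apply: ltnW; apply: leq_trans g0 _; exact: gle.
- move=> a b ma ab; rewrite /s2.
  case: (ltnP b m1) => bm.
    have -> : (a < m1)%N by lia.
    exact: mono2.
  case: (ltnP a m1) => am.
    apply: leq_ltn_trans (s1le a ma am) _; apply: leq_trans g0 _; exact: gle.
  apply: gmono; lia.
- move=> k mk kq.
  have m1pos : (0 < m1)%N by lia.
  rewrite /psum (big_cat_nat (leq0n m1) (leqW mk)) /=.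
  have -> : \sum_(0 <= i < m1) x (s2 i) = psum x s1 m1.-1.
    rewrite /psum prednK //; apply: eq_big_nat => i /andP[_ im]; by rewrite /s2 im.
  have hS : `|\sum_(m1 <= i < k.+1) x (s2 i)| < 1.
    apply: (le_lt_trans (ler_norm_sum _ _ _)).
    apply: (@le_lt_trans _ _ (\sum_(m1 <= i < k.+1) e)).
      by apply: ler_sum_nat => i /andP[mi _]; rewrite /s2 ltnNge mi /=; exact/ltW/gsmall.
    rewrite sumr_const_nat -mulr_natl ltr_pdivrMr ?ltr0n // mul1r ltr_nat; lia.
  apply: (lt_le_trans _ (lerB_normD _ _)).
  by rewrite ltrBrDr; apply: lt_trans big; rewrite ltrD2l.
Qed.

End Analytic.

Definition nswap (a b : nat) (z : nat) : nat :=
  if z == a then b else if z == b then a else z.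

Lemma nswap_inv a b : involutive (nswap a b).
Proof.
move=> z; rewrite /nswap.
have [->|za] := eqVneq z a; first by rewrite eqxx; case: eqVneq.
have [->|zb] := eqVneq z b; first by rewrite eqxx.
by rewrite (negPf za) (negPf zb).
Qed.

Lemma bij_extend (f : nat -> nat) (q : nat) :
  (forall a b, (a < q)%N -> (b < q)%N -> f a = f b -> a = b) ->
  exists p : nat -> nat, bijective p /\ forall i, (i < q)%N -> p i = f i.
Proof.
move=> finj.
pose gk := fix gk k := match k with 0 => id | k'.+1 => nswap (gk k' k') (f k') \o gk k' end.
have gb : forall k, bijective (gk k).
  elim => [|k IH] /=; first by exists id.
  by apply: bij_comp => //; exact: inv_bij (nswap_inv _ _).
have gf : forall k, (k <= q)%N -> forall i, (i < k)%N -> gk k i = f i.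
  elim => [|k IH] kq i //= ik.
  rewrite /nswap.
  rewrite ltnS leq_eqVlt in ik; case/orP: ik => [/eqP ->|ik]; first by rewrite eqxx.
  rewrite IH ?(ltnW kq) //.
  have -> : (f i == gk k k) = false.
    apply/negP => /eqP h; rewrite -IH ?(ltnW kq) // in h.
    by move: (bij_inj (gb k) h) => ei; rewrite ei ltnn in ik.
  have -> : (f i == f k) = false.
    apply/negP => /eqP /finj h; have := h (ltn_trans ik kq) kq.
    by move=> ei; rewrite ei ltnn in ik.
  by [].
by exists (gk q); split; [exact: gb | exact: gf].
Qed.
Section Main.
Variables (R : realType) (X : normedModType R) (x : nat -> X).

Definition Phi (M : nat) (s : nat -> nat) (i : nat) : bool := M%:R < `|psum x s i|.

Definition Gset (Q : set {ptws nat -> nat}) (F : (set {ptws nat -> bool})^nat)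
  (M n m : nat) (us : seq bool) : set (set_type Q) :=
  [set s | (forall i, nth false us i -> Phi M (set_val s) i) /\
     forall B : nat -> bool, (forall i, B i -> Phi M (set_val s) i) ->
       (forall i, (i < m)%N -> B i = nth false us i) -> closure (F n) B].

Lemma Phi_ext M (a b : nat -> nat) i : (forall j, (j <= i)%N -> a j = b j) ->
  Phi M a i = Phi M b i.
Proof. by move=> h; rewrite /Phi (psum_ext x h). Qed.

Variables (t : nat -> nat) (tS : Sset t)
  (tU : ~ (exists M : R, forall n, `|psum x t n| <= M))
  (small : forall (e : R) N, 0 < e -> exists n, (N <= n)%N /\ `|x n| < e).

Lemma G_nd (Q : set {ptws nat -> nat}) (F : (set {ptws nat -> bool})^nat)
  (ndF : forall n, nowhere_dense (F n))
  (realize : forall (s0 : set_type Q) (s2 : nat -> nat) m0 q, (m0 <= q)%N ->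
     (forall i, (i < m0)%N -> s2 i = set_val s0 i) ->
     (forall i k, (i < m0)%N -> (m0 <= k)%N -> (s2 i < s2 k)%N) ->
     (forall a b, (m0 <= a)%N -> (a < b)%N -> (s2 a < s2 b)%N) ->
     exists s : set_type Q, cyl s2 q (set_val s))
  M n m us : nowhere_dense (Gset (Q:=Q) F M n m us).
Proof.
apply: nd_settype => s0 m0'.
pose m0 := maxn m0' m.
have [s1 [m1 [h01 a1 mo1 mo2 big]]] := block tS tU (M%:R) (set_val s0) m0.
pose B0 := fun i => if (i < m)%N then nth false us i else Phi M s1 i.
have [w [q [m1q cw av]]] := nd_cyl (ndF n) B0 m1.
have [s2 [a2 mo1' mo2' bigq]] := fill small q h01 mo1 mo2 big.
have m0q : (m0 <= q)%N by lia.
have a20 : forall i, (i < m0)%N -> s2 i = set_val s0 i.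
  by move=> i im; rewrite a2 ?a1 //; lia.
have [s cs] := realize s0 s2 m0 q m0q a20 mo1' mo2'.
exists s, q; split.
- lia.
- move=> i im; rewrite cs; last by lia.
  by apply: a20; lia.
- move=> u cu [hu hB].
  have eqPhi : forall i, (i < q)%N -> Phi M (set_val u) i = Phi M s2 i.
    move=> i iq; apply: Phi_ext => j ji; rewrite cu; last by lia.
    by rewrite cs //; lia.
  pose B i := (i < q)%N && w i.
  apply: (av B); first by move=> i iq; rewrite /B iq.
  apply: hB.
  + move=> i /andP[iq wi].
    have wB0 : w i = B0 i -> True by [].
    case: (ltnP i m) => im.
      apply: hu; have := cw i (leq_trans im (leq_trans (leq_maxr m0' m) (ltnW h01))).
      by rewrite wi /B0 im => <-.
    case: (ltnP i m1) => im1.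
      have := cw i im1; rewrite wi /B0 ltnNge im /= => h.
      rewrite eqPhi // (Phi_ext _ (b := s1)) //.
      by move=> j ji; apply: a2; lia.
    by rewrite eqPhi //; exact: bigq.
  + move=> i im; rewrite /B.
    have -> : (i < q)%N by lia.
    rewrite /= cw; last by lia.
    by rewrite /B0 im.
Qed.

End Main.

Section Final.
Variables (R : realType) (X : normedModType R) (x : nat -> X).
Variables (t : nat -> nat) (tS : Sset t)
  (tU : ~ (exists M : R, forall n, `|psum x t n| <= M))
  (small : forall (e : R) N, 0 < e -> exists n, (N <= n)%N /\ `|x n| < e).
Variables (I : set (set nat)) (isI : is_ideal I) (F : (set {ptws nat -> bool})^nat)
  (ndF : forall n, nowhere_dense (F n))
  (cover : ideal_as_subset I `<=` \bigcup_n F n).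

Lemma meager_Q (Q : set {ptws nat -> nat})
  (realize : forall (s0 : set_type Q) (s2 : nat -> nat) m0 q, (m0 <= q)%N ->
     (forall i, (i < m0)%N -> s2 i = set_val s0 i) ->
     (forall i k, (i < m0)%N -> (m0 <= k)%N -> (s2 i < s2 k)%N) ->
     (forall a b, (m0 <= a)%N -> (a < b)%N -> (s2 a < s2 b)%N) ->
     exists s : set_type Q, cyl s2 q (set_val s))
  (D : set (set_type Q)) (HD : forall s, D s -> I_bounded I (psum x (set_val s))) :
  meager D.
Proof.
pose Fam k : set (set_type Q) :=
  match @unpickle ((nat * nat * nat) * seq bool)%type k with
  | Some (M, n, m, us) => Gset x (Q:=Q) F M n m us | None => set0 end.
exists Fam; split.
  move=> k; rewrite /Fam; case: unpickle => [[[[M n] m] us]|].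
    exact: (G_nd tS tU small ndF realize).
  by rewrite /nowhere_dense closure0 interior0.
move=> s Ds; have [Mr Mr0 IMr] := HD s Ds.
pose M := (Num.Def.trunc Mr).+1.
have MrM : Mr < M%:R := truncnS_gt Mr.
case: isI => I0 IU Isub IT Ifin.
have IA : I [set i | Phi x M (set_val s) i].
  by apply: Isub IMr => i /= h; exact: lt_trans MrM h.
have [n [m [us [hu hB]]]] := sub_claim (And5 I0 IU Isub IT Ifin) cover IA.
exists (pickle (M, n, m, us)) => //; rewrite /Fam pickleK.
by split.
Qed.

End Final.

Lemma realize_S (s0 : set_type Sset) (s2 : nat -> nat) m0 q : (m0 <= q)%N ->
     (forall i, (i < m0)%N -> s2 i = set_val s0 i) ->
     (forall i k, (i < m0)%N -> (m0 <= k)%N -> (s2 i < s2 k)%N) ->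
     (forall a b, (m0 <= a)%N -> (a < b)%N -> (s2 a < s2 b)%N) ->
     exists s : set_type Sset, cyl s2 q (set_val s).
Proof.
case: s0 => f hf; move/set_mem: (hf) => fS _ a20 mo1 mo2.
have hs2 : Sset s2.
  move=> a b ab; case: (ltnP b m0) => bm.
    rewrite !a20 //; last exact: ltn_trans ab bm.
    exact: fS.
  case: (ltnP a m0) => am; first exact: mo1.
  exact: mo2.
by exists (exist _ s2 (mem_set hs2)).
Qed.

Lemma realize_P (s0 : set_type Pset) (s2 : nat -> nat) m0 q : (m0 <= q)%N ->
     (forall i, (i < m0)%N -> s2 i = set_val s0 i) ->
     (forall i k, (i < m0)%N -> (m0 <= k)%N -> (s2 i < s2 k)%N) ->
     (forall a b, (m0 <= a)%N -> (a < b)%N -> (s2 a < s2 b)%N) ->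
     exists s : set_type Pset, cyl s2 q (set_val s).
Proof.
case: s0 => f hf; move/set_mem: (hf) => fP _ a20 mo1 mo2.
have neq : forall a b, (a < b)%N -> s2 a <> s2 b.
  move=> a b ab; case: (ltnP b m0) => bm.
    rewrite !a20 //; last exact: ltn_trans ab bm.
    move=> /(bij_inj fP) e; by rewrite e ltnn in ab.
  case: (ltnP a m0) => am.
    by move=> e; have := mo1 _ _ am bm; rewrite e ltnn.
  by move=> e; have := mo2 _ _ am ab; rewrite e ltnn.
have inj : forall a b, (a < q)%N -> (b < q)%N -> s2 a = s2 b -> a = b.
  move=> a b _ _ e; case: (ltngtP a b) => // ab.
  - by have := neq _ _ ab.
  - by have := neq _ _ ab; rewrite e.
have [p [pb pe]] := bij_extend inj.
by exists (exist _ p (mem_set pb)) => i iq; exact: pe.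
Qed.

Theorem mainTheorem3 (R : realType) (X : completeNormedModType R) (x : nat -> X)
  (I : set (set nat)) :
  limn_einf (fun n => (`|x n|)%:E) = 0%E ->
  is_ideal I ->
  has_Baire_property (ideal_as_subset I) ->
  (exists s, Sset s /\ ~ (exists M : R, forall n, `|psum x s n| <= M)) ->
  meager (Eset I x) /\ meager (Fset I x).
Proof.
move=> lim0 isI BP [t [tS tU]].
have [F [ndF cover]] := ideal_meager isI BP.
have small := liminf_small lim0.
split.
- apply: (meager_Q tS tU small isI ndF cover realize_S).
  by move=> s Ds; exact: Ds.
- apply: (meager_Q tS tU small isI ndF cover realize_P).
  by move=> s Ds; exact: Ds.
Qed.
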